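(* Let $x,v$ be positive integers with $xv\ge3$, and let $\lambda=(x,x,\dots,x)$ consist of $v$ copies of $x$ (so $n=vx$). Then $P(\lambda)\setminus\{0\}$ is isomorphic to the poset whose elements are \[ \{(r,p)\in\mathbb{Z}^2:0\le r<x,\ 0\le p<v\}\setminus\{(0,0),(x-1,v-1)\}, \] with strict order relation $(r,p)\prec(r',p')$ if and only if both $p>p'$ and $r'>r$.
   Context: For a vector $\lambda=(\lambda_1,\dots,\lambda_d)$ of positive integers with sum $n\ge2$, $\Delta_\lambda=\mathrm{conv}(e_1,\dots,e_d,\lambda)\subset\mathbb{R}^d$ has fundamental parallelepiped $\Pi_\lambda=\{\sum_{i=1}^d\gamma_i(1,e_i)+\gamma_{d+1}(1,\lambda):0\le\gamma_i<1\}\subset\mathbb{R}^{d+1}$. $P(\lambda)$ is $\Pi_\lambda\cap\mathbb{Z}^{d+1}$ ordered by $\sigma\preceq\mu$ iff $\mu-\sigma\in\Pi_\lambda\cap\mathbb{Z}^{d+1}$; the origin $0$ is its minimum. *)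

(* Defs.v *)
From HB Require Import structures.
From mathcomp Require Import all_boot all_order all_algebra.
From mathcomp Require Import reals.
Set Implicit Arguments. Unset Strict Implicit. Unset Printing Implicit Defensive.
Import Order.TTheory GRing.Theory Num.Theory.
Local Open Scope ring_scope.

(* Points of R^{d+1} / Z^{d+1} are indexed by 'I_d.+1; coordinate ord0 is the
   extra "1" coordinate, coordinate (lift ord0 i) is the i-th coordinate of R^d. *)

Definition gen_e (R : realType) (d : nat) (i : 'I_d) (k : 'I_d.+1) : R :=
  if k == ord0 then 1 else if k == lift ord0 i then 1 else 0.

Definition gen_lam (R : realType) (d : nat) (lam : 'I_d -> nat) (k : 'I_d.+1) : R :=
  if unlift ord0 k is Some j then (lam j)%:R else 1.

Definition inPi (R : realType) (d : nat) (lam : 'I_d -> nat)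
  (z : {ffun 'I_d.+1 -> int}) : Prop :=
  exists (g : 'I_d -> R) (c : R),
    (forall i, 0 <= g i < 1) /\ (0 <= c < 1) /\
    forall k : 'I_d.+1,
      (z k)%:~R = \sum_(i < d) g i * gen_e R i k + c * gen_lam R lam k.

Definition Ple (R : realType) (d : nat) (lam : 'I_d -> nat)
  (s m : {ffun 'I_d.+1 -> int}) : Prop :=
  inPi R lam [ffun k => m k - s k].

Definition zero_pt (d : nat) : {ffun 'I_d.+1 -> int} := [ffun => 0].

Definition inS (x v : nat) (q : int * int) : Prop :=
  [/\ 0 <= q.1 < x%:Z, 0 <= q.2 < v%:Z, q <> (0, 0) & q <> ((x%:Z - 1), (v%:Z - 1))].

Definition Sltn (q q' : int * int) : Prop := q'.2 < q.2 /\ q.1 < q'.1.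

(* Main.v *)
Require Import Defs.
From HB Require Import structures.
From mathcomp Require Import all_boot all_order all_algebra.
From mathcomp Require Import reals.
From mathcomp Require Import zify ring lra.
Import Order.TTheory GRing.Theory Num.Theory.
Local Open Scope ring_scope.

Definition Cond (x v : nat) (h a : int) : Prop :=
  (h = 0 /\ a = 0) \/ (1 <= a <= x%:Z /\ 1 <= x%:Z * h - a <= x%:Z * v%:Z - 2).

Definition mk (v : nat) (h a : int) : {ffun 'I_v.+1 -> int} :=
  [ffun k => if k == ord0 then h else a].

Lemma gen_e0 (R : realType) d (i : 'I_d) : gen_e R i ord0 = 1.
Proof. by rewrite /gen_e eqxx. Qed.

Lemma gen_eS (R : realType) d (i j : 'I_d) : gen_e R i (lift ord0 j) = (i == j)%:R.
Proof.
rewrite /gen_e eq_sym (negbTE (neq_lift ord0 j)).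
by rewrite (inj_eq (@lift_inj _ ord0)) eq_sym; case: eqP.
Qed.

Lemma gen_lam0 (R : realType) d (lam : 'I_d -> nat) : gen_lam R lam ord0 = 1.
Proof. by rewrite /gen_lam unlift_none. Qed.

Lemma gen_lamS (R : realType) d (lam : 'I_d -> nat) j :
  gen_lam R lam (lift ord0 j) = (lam j)%:R.
Proof. by rewrite /gen_lam liftK. Qed.

Lemma sum0 (R : realType) d (g : 'I_d -> R) :
  \sum_(i < d) g i * gen_e R i ord0 = \sum_(i < d) g i.
Proof. by apply: eq_bigr => i _; rewrite gen_e0 mulr1. Qed.

Lemma sumS (R : realType) d (g : 'I_d -> R) j :
  \sum_(i < d) g i * gen_e R i (lift ord0 j) = g j.
Proof.
rewrite (bigD1 j) //= gen_eS eqxx mulr1 big1 ?addr0 // => i /negbTE ij.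
by rewrite gen_eS ij mulr0.
Qed.

Lemma int_small (R : realType) (k : int) : -1 < (k%:~R : R) < 1 -> k = 0.
Proof.
move=> /andP[h1 h2].
have a1 : -1 < k by rewrite -(ltr_int R) intrN.
have a2 : k < 1 by rewrite -(ltr_int R).
lia.
Qed.

Lemma inord1_ne0 v : (0 < v)%N -> ((inord 1 : 'I_v.+1) == ord0) = false.
Proof. by move=> hv; apply/negbTE; rewrite -val_eqE /= inordK. Qed.

Lemma inPi_fwd (R : realType) (x v : nat) z : (0 < x)%N -> (0 < v)%N -> (3 <= x * v)%N ->
  inPi R (fun _ : 'I_v => x) z ->
  z = mk v (z ord0) (z (inord 1)) /\ Cond x v (z ord0) (z (inord 1)).
Proof.
move=> hx hv hn [g [c [hg [/andP[c0 c1] hz]]]].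
pose j0 : 'I_v := Ordinal hv.
have e1 : (inord 1 : 'I_v.+1) = lift ord0 j0 by apply: val_inj; rewrite /= inordK.
have hzS j : (z (lift ord0 j))%:~R = g j + c * x%:R by rewrite hz sumS gen_lamS.
have hz0 : (z ord0)%:~R = \sum_i g i + c by rewrite hz sum0 gen_lam0 mulr1.
set a := z (inord 1). set h := z ord0.
have eqa j : z (lift ord0 j) = a.
  apply/eqP; rewrite -subr_eq0; apply/eqP; apply: (int_small R).
  rewrite intrB hzS /a e1 hzS.
  have := hg j; have := hg j0; move=> /andP[? ?] /andP[? ?]; apply/andP; split; lra.
pose gm := a%:~R - c * x%:R : R.
have gj j : g j = gm by have := hzS j; rewrite eqa /gm => ->; ring.
have hsum : \sum_i g i = v%:R * gm.
  by rewrite (eq_bigr (fun=> gm)) // sumr_const card_ord mulr_natl.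
have Hh : (h%:~R : R) = v%:R * gm + c by rewrite /h hz0 hsum.
have /andP[g0 g1] : 0 <= gm < 1 by rewrite -(gj j0); exact: hg.
pose T := x%:Z * h - a.
have cx : ((x%:Z)%:~R : R) = x%:R by [].
have cv : ((v%:Z)%:~R : R) = v%:R by [].
have HT : (T%:~R : R) = (x%:R * v%:R - 1) * gm.
  by rewrite /T intrB intrM Hh /gm cx; ring.
have hxv : (3 : R) <= x%:R * v%:R by rewrite -natrM (ler_nat R 3).
have T0 : 0 <= T by rewrite -(ler_int R) HT; nra.
have T1 : T < x%:Z * v%:Z - 1.
  by rewrite -(ltr_int R) HT intrB intrM cx cv (_ : 1%:~R = 1 :> R) //; nra.
have Ha : (a%:~R : R) = gm + c * x%:R by rewrite /gm; ring.
have hX : (1 : R) <= x%:R by rewrite (ler_nat R 1).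
split.
  apply/ffunP => k; rewrite ffunE; case: (unliftP ord0 k) => [j ->|->]; last by rewrite eqxx.
  by rewrite eq_sym (negbTE (neq_lift ord0 j)) eqa.
case: (ltrP 0 T) => [Tpos|Tle].
  have gpos : 0 < gm.
    have : (0 : R) < T%:~R by rewrite ltr0z.
    rewrite HT; nra.
  have a0 : 0 < a by rewrite -(ltr_int R) Ha; nra.
  have a1 : a < x%:Z + 1 by rewrite -(ltr_int R) Ha intrD cx; nra.
  right; rewrite /T in T0 T1 Tpos; lia.
have T00 : T = 0 by lia.
have gz : gm = 0.
  have : (T%:~R : R) = 0 by rewrite T00.
  rewrite HT; nra.
have a0 : 0 <= a by rewrite -(ler_int R) Ha gz; nra.
have a1 : a < x%:Z by rewrite -(ltr_int R) Ha gz cx; nra.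
left; rewrite /T in T00; clearbody a h; move: T00 a0 a1 hx.
have [hh|hh] := lerP h 0; move=> *.
  have : (x%:Z) * h <= 0 by rewrite mulr_ge0_le0.
  lia.
have : (x%:Z) * 1 <= x%:Z * h by rewrite ler_pM2l; lia.
lia.
Qed.

Lemma inPi_bwd (R : realType) (x v : nat) h a : (0 < x)%N -> (0 < v)%N -> (3 <= x * v)%N ->
  Cond x v h a -> inPi R (fun _ : 'I_v => x) (mk v h a).
Proof.
move=> hx hv hn [[-> ->]|[ha hT]].
  exists (fun=> 0), 0; split; first by move=> i; rewrite lexx ltr01.
  split; first by rewrite lexx ltr01.
  move=> k; rewrite ffunE if_same big1 => [|i _]; by rewrite ?mul0r ?addr0.
have cx : ((x%:Z)%:~R : R) = x%:R by [].
have cv : ((v%:Z)%:~R : R) = v%:R by [].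
have c1 : (1%:~R : R) = 1 by [].
have c2 : (2%:~R : R) = 2 by [].
have hxv : (3 : R) <= x%:R * v%:R by rewrite -natrM (ler_nat R 3).
have hX : (1 : R) <= x%:R by rewrite (ler_nat R 1).
pose D : R := x%:R * v%:R - 1.
have D0 : D != 0 by rewrite /D; apply/eqP; lra.
pose T := x%:Z * h - a.
have HT : (T%:~R : R) = x%:R * h%:~R - a%:~R by rewrite /T intrB intrM cx.
have /andP[T1 T2] : ((1 : R) <= T%:~R) && (T%:~R <= D - 1).
  move: hT; rewrite -/T => /andP[t1 t2].
  have u1 : (1%:~R : R) <= T%:~R by rewrite ler_int.
  have u2 : (T%:~R : R) <= (x%:Z * v%:Z - 2)%:~R by rewrite ler_int.
  move: u2; rewrite c1 in u1; rewrite !intrB !intrM cx c2 /D => u2.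
  apply/andP; split; lra.
move: ha => /andP[ta1 ta2].
have a1 : (1 : R) <= a%:~R by rewrite -c1 ler_int.
have a2 : (a%:~R : R) <= x%:R by rewrite -cx ler_int.
pose gm := T%:~R / D.
have gmD : gm * D = T%:~R by rewrite /gm divfK.
have X0 : (x%:R : R) != 0 by apply/eqP; lra.
pose c := (a%:~R - gm) / x%:R.
have cX : c * x%:R = a%:~R - gm by rewrite /c divfK.
have Dpos : 0 < D by rewrite /D; lra.
have gm0 : 0 < gm by nra.
have gm1 : gm < 1 by nra.
exists (fun=> gm), c; split; first by move=> i; apply/andP; split; lra.
split; first by apply/andP; split; nra.
move=> k; rewrite ffunE; case: (unliftP ord0 k) => [j ->|->].
  rewrite eq_sym (negbTE (neq_lift ord0 j)) sumS gen_lamS; lra.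
rewrite eqxx sum0 sumr_const card_ord gen_lam0 mulr1 -mulr_natl.
apply: (mulfI X0).
have : x%:R * h%:~R = T%:~R + a%:~R :> R by rewrite HT; ring.
move=> ->; rewrite -gmD /D; nra.
Qed.

Theorem theorem4p1 (R : realType) (x v : nat) :
  (0 < x)%N -> (0 < v)%N -> (3 <= x * v)%N ->
  let lam : 'I_v -> nat := fun _ => x in
  let P := fun z : {ffun 'I_v.+1 -> int} => inPi R lam z /\ z <> zero_pt v in
  exists f : {ffun 'I_v.+1 -> int} -> int * int,
    [/\ (forall z, P z -> inS x v (f z)),
        (forall q, inS x v q -> exists2 z, P z & f z = q),
        (forall z1 z2, P z1 -> P z2 -> f z1 = f z2 -> z1 = z2) &
        (forall s m, P s -> P m ->
           (Ple R lam s m <-> (f s = f m \/ Sltn (f s) (f m))))].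
Proof.
move=> hx hv hn lam P.
have mk0 h a : mk v h a ord0 = h by rewrite ffunE eqxx.
have mkS h a : mk v h a (inord 1) = a by rewrite ffunE inord1_ne0.
have xpos : 0 < x%:Z by lia.
have shape z : P z -> exists h a, z = mk v h a /\
    (1 <= a <= x%:Z /\ 1 <= x%:Z * h - a <= x%:Z * v%:Z - 2).
  case=> /inPi_fwd [//|//|//|e [[h0 a0]|B]] nz; last by exists (z ord0), (z (inord 1)).
  by case: nz; rewrite e h0 a0; apply/ffunP => k; rewrite !ffunE if_same.
exists (fun z => (z (inord 1) - 1, v%:Z - z ord0)); split.
- move=> z /shape [h [a [-> [/andP[a1 a2] /andP[t1 t2]]]]]; rewrite /= mk0 mkS.
  have h1 : 1 <= h.
    case: (lerP 1 h) => // hh.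
    have : x%:Z * h <= 0 by rewrite mulr_ge0_le0 //; lia.
    lia.
  have h2 : h <= v%:Z.
    case: (lerP h v%:Z) => // hh.
    have : x%:Z * (v%:Z + 1) <= x%:Z * h by rewrite ler_pM2l //; lia.
    rewrite mulrDr mulr1; lia.
  rewrite /inS /=; split; try (apply/andP; split); try lia.
    case=> e1 e2.
    have e3 : h = v%:Z by lia.
    rewrite e3 in t2; lia.
  case=> e1 e2.
  have e3 : h = 1 by lia.
  rewrite e3 in t1; lia.
- move=> [r p]; rewrite /inS /= => -[/andP[r0 r1] /andP[p0 p1] n1 n2].
  have hp : p = 0 -> r <> 0 by move=> e0 e; apply: n1; rewrite e0 e.
  have hp' : p = v%:Z - 1 -> r <> x%:Z - 1 by move=> e0 e; apply: n2; rewrite e0 e.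
  exists (mk v (v%:Z - p) (r + 1)); last by rewrite mk0 mkS; congr pair; lia.
  split; last first.
    move=> /(congr1 (fun z : {ffun 'I_v.+1 -> int} => z ord0)); rewrite mk0 ffunE /= => e.
    lia.
  apply: inPi_bwd => //; right; split; first (apply/andP; split; lia).
  rewrite mulrBr.
  apply/andP; split.
    case: (lerP (v%:Z - 1) p) => hp1.
      have e : p = v%:Z - 1 by lia.
      move: (hp' e); rewrite e mulrBr mulr1; lia.
    have D : x%:Z * p <= x%:Z * (v%:Z - 2) by rewrite ler_pM2l //; lia.
    rewrite mulrBr in D; lia.
  case: (lerP p 0) => hp0.
    have e : p = 0 by lia.
    move: (hp e); rewrite e mulr0; lia.
  have C : x%:Z * 1 <= x%:Z * p by rewrite ler_pM2l //; lia.
  rewrite mulr1 in C; lia.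
- move=> z1 z2 /shape [h1 [a1 [-> _]]] /shape [h2 [a2 [-> _]]].
  rewrite !mk0 !mkS => [[e1 e2]].
  have -> : a1 = a2 by lia.
  by have -> : h1 = h2 by lia.
- move=> s m /shape [hs [as_ [-> [/andP[sa1 sa2] /andP[st1 st2]]]]]
    /shape [hm [am [-> [/andP[ma1 ma2] /andP[mt1 mt2]]]]].
  rewrite /Ple.
  have -> : [ffun k => mk v hm am k - mk v hs as_ k] = mk v (hm - hs) (am - as_).
    by apply/ffunP => k; rewrite !ffunE; case: ifP.
  rewrite !mk0 !mkS /Sltn /=; split.
    move/inPi_fwd => [//|//|//|_]; rewrite mk0 mkS => -[[e1 e2]|[/andP[b1 b2] /andP[b3 b4]]].
      by left; congr pair; lia.
    right; split; last by lia.
    case: (lerP (hm - hs) 0) => hh; last by lia.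
    have : x%:Z * (hm - hs) <= 0 by rewrite mulr_ge0_le0 //; lia.
    lia.
  move=> H; apply: inPi_bwd => //.
  case: H => [[e1 e2]|[e1 e2]]; first by left; split; lia.
  right; split; first (apply/andP; split; lia).
  have C : x%:Z * 1 <= x%:Z * (hm - hs) by rewrite ler_pM2l //; lia.
  rewrite mulr1 mulrBr in C; rewrite mulrBr.
  apply/andP; split; lia.
Qed.
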